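(* There is a constant $c_1>0$ such that for all $n>5$, $$h_3(n,\{(4,0),(4,2)\}) > c_1\, n^{1/5}.$$ That is, every $n$-vertex $3$-graph in which every four vertices span $1$, $3$ or $4$ edges has a clique or coclique of size greater than $c_1 n^{1/5}$.
   Context: For an $r$-uniform hypergraph ($r$-graph) $H$, a homogeneous set is a set of vertices that is either a clique (every $r$-subset is an edge) or a coclique (no $r$-subset is an edge); $h(H)$ denotes the size of a largest homogeneous set. An $(m,f)$-graph is an $r$-graph with $m$ vertices and $f$ edges; $H$ is $(m,f)$-free if it contains no induced sub-hypergraph that is an $(m,f)$-graph. For a set $Q$ of pairs $(m,f)$, $H$ is $Q$-free if it is $(m,f)$-free for every $(m,f)\in Q$. $h_r(n,Q)$ is the minimum of $h(H)$ over all $n$-vertex $Q$-free $r$-graphs $H$. *)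

(* Defs.v *)
From mathcomp Require Import all_boot.
From Stdlib Require Import Reals.

Set Implicit Arguments.
Unset Strict Implicit.
Unset Printing Implicit Defensive.

Section Hyper.
Variable T : finType.

Definition is_rgraph (r : nat) (E : {set {set T}}) : bool :=
  [forall e in E, #|e| == r].

Definition is_clique (r : nat) (E : {set {set T}}) (S : {set T}) : bool :=
  [forall e : {set T}, ((e \subset S) && (#|e| == r)) ==> (e \in E)].

Definition is_coclique (r : nat) (E : {set {set T}}) (S : {set T}) : bool :=
  [forall e : {set T}, ((e \subset S) && (#|e| == r)) ==> (e \notin E)].

Definition homogeneous (r : nat) (E : {set {set T}}) (S : {set T}) : bool :=
  is_clique r E S || is_coclique r E S.

Definition hom_number (r : nat) (E : {set {set T}}) : nat :=
  \max_(S : {set T} | homogeneous r E S) #|S|.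

Definition induced_edges (E : {set {set T}}) (X : {set T}) : nat :=
  #|[set e in E | e \subset X]|.

Definition mf_free (E : {set {set T}}) (m f : nat) : bool :=
  [forall X : {set T}, (#|X| == m) ==> (induced_edges E X != f)].

Definition Q_free (E : {set {set T}}) (Q : seq (nat * nat)) : bool :=
  all (fun p => mf_free E p.1 p.2) Q.

End Hyper.

(* h_r(n,Q): minimum of h(H) over all Q-free r-graphs H on the n vertices 'I_n.
   (Default value n if there is no such r-graph; irrelevant below since the
   complete r-graph is {(4,0),(4,2)}-free.) *)
Definition h_rnQ (r n : nat) (Q : seq (nat * nat)) : nat :=
  \big[minn/n]_(E : {set {set 'I_n}} | is_rgraph r E && Q_free E Q)
     hom_number r E.

(* Main.v *)
Require Import Defs.
From mathcomp Require Import all_boot.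
From Stdlib Require Import Reals.
From mathcomp Require Import zify.
From Stdlib Require Import Lra.

Section Core.
Variable T : finType.
Variable E : {set {set T}}.
Hypothesis HE : is_rgraph 3 E.
Hypothesis HQ : Q_free E [:: (4, 0); (4, 2)].

Lemma rg3 (e : {set T}) : e \in E -> #|e| = 3.
Proof. by move=> He; move/forall_inP: HE => /(_ e He) /eqP. Qed.

Lemma free4 (X : {set T}) : #|X| = 4 -> induced_edges E X != 0 /\ induced_edges E X != 2.
Proof.
move=> HX; move: HQ; rewrite /Q_free /= => /and3P [H0 H2 _].
move/forallP: H0 => /(_ X); rewrite HX eqxx /= => ->.
by move/forallP: H2 => /(_ X); rewrite HX eqxx /= => ->.
Qed.

Lemma ind_sum (X : {set T}) : #|X| = 4 -> induced_edges E X = \sum_(y in X) (X :\ y \in E).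
Proof.
move=> HX; rewrite /induced_edges.
have -> : [set e in E | e \subset X] = (fun y => X :\ y) @: [set y in X | X :\ y \in E].
  apply/setP => e; rewrite inE; apply/andP/imsetP.
  - move=> [He HeX].
    have Hc : #|X :\: e| = 1.
      by rewrite cardsD (setIidPr HeX) (rg3 _ He) HX.
    move/eqP/cards1P: Hc => [y Hy].
    have Hey : e = X :\ y by rewrite -Hy setDDr setDv set0U (setIidPr HeX).
    exists y => //.
    have : y \in X :\: e by rewrite Hy set11.
    by rewrite !inE -Hey He andbT => /andP [].
  - move=> [y]; rewrite inE => /andP [HyX HyE] ->; split => //.
    exact: subD1set.
rewrite card_in_imset; last first.
  move=> y z; rewrite !inE => /andP [Hy _] /andP [Hz _] Heq.
  apply/eqP; apply: contraT => Hyz.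
  have : y \in X :\ z by rewrite !inE Hyz.
  by rewrite -Heq !inE eqxx.
rewrite -sum1_card big_mkcond /= [RHS]big_mkcond /=.
by apply: eq_bigr => y _; rewrite inE; case: (y \in X); case: (X :\ y \in E).
Qed.

Ltac bsolve := repeat (case: eqP => ?; subst); first [done | congruence].

Definition P (a b c : T) : bool := [set a; b; c] \in E.

Lemma sum4 (F : T -> nat) (a b c d : T) : a <> b -> a <> c -> a <> d -> b <> c -> b <> d -> c <> d ->
  \sum_(y in [set a; b; c; d]) F y = F a + F b + F c + F d.
Proof.
move=> *.
have -> : [set a; b; c; d] = a |: (b |: (c |: [set d])) by apply/setP => z; rewrite !inE; bsolve.
rewrite big_setU1 /=; last by rewrite !inE; bsolve.
rewrite big_setU1 /=; last by rewrite !inE; bsolve.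
rewrite big_setU1 /=; last by rewrite !inE; bsolve.
by rewrite big_set1 !addnA.
Qed.

Lemma four (a b c d : T) : a <> b -> a <> c -> a <> d -> b <> c -> b <> d -> c <> d ->
  ((P b c d : nat) + P a c d + P a b d + P a b c != 0) /\
  ((P b c d : nat) + P a c d + P a b d + P a b c != 2).
Proof.
move=> *.
have HX : #|[set a; b; c; d]| = 4.
  by rewrite -sum1_card sum4.
have := free4 _ HX; rewrite ind_sum // sum4 //.
have -> : [set a; b; c; d] :\ a = [set b; c; d] by apply/setP => z; rewrite !inE; bsolve.
have -> : [set a; b; c; d] :\ b = [set a; c; d] by apply/setP => z; rewrite !inE; bsolve.
have -> : [set a; b; c; d] :\ c = [set a; b; d] by apply/setP => z; rewrite !inE; bsolve.
have -> : [set a; b; c; d] :\ d = [set a; b; c] by apply/setP => z; rewrite !inE; bsolve.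
done.
Qed.

Lemma keyA (v x a b c : T) : v <> x -> v <> a -> v <> b -> v <> c -> x <> a -> x <> b -> x <> c ->
  a <> b -> a <> c -> b <> c ->
  ~~ P v x a -> ~~ P v x b -> ~~ P v x c -> P a b c.
Proof.
move=> *.
have [H1 H1'] := @four v x a b ltac:(done) ltac:(done) ltac:(done) ltac:(done) ltac:(done) ltac:(done).
have [H2 H2'] := @four v x a c ltac:(done) ltac:(done) ltac:(done) ltac:(done) ltac:(done) ltac:(done).
have [H3 H3'] := @four v x b c ltac:(done) ltac:(done) ltac:(done) ltac:(done) ltac:(done) ltac:(done).
have [H4 H4'] := @four v a b c ltac:(done) ltac:(done) ltac:(done) ltac:(done) ltac:(done) ltac:(done).
have [H5 H5'] := @four x a b c ltac:(done) ltac:(done) ltac:(done) ltac:(done) ltac:(done) ltac:(done).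
move: H1 H1' H2 H2' H3 H3' H4 H4' H5 H5'.
repeat match goal with H : is_true (~~ P _ _ _) |- _ => rewrite (negbTE H); clear H end.
by case: (P x a b); case: (P v a b); case: (P x a c); case: (P v a c);
   case: (P x b c); case: (P v b c); case: (P a b c).
Qed.

Lemma card3 (e : {set T}) : #|e| = 3 ->
  exists a b c, [/\ a <> b, a <> c, b <> c & e = [set a; b; c]].
Proof.
move=> He.
have : 0 < #|e| by rewrite He.
rewrite card_gt0 => /set0Pn [a Ha].
have : #|e :\ a| == 2.
  by move: He; rewrite (cardsD1 a e) Ha add1n => -[->].
move/cards2P => [b [c [/eqP Hbc Hbc']]].
have Hb : b \in e :\ a by rewrite Hbc' !inE eqxx.
have Hc : c \in e :\ a by rewrite Hbc' !inE eqxx orbT.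
move: Hb Hc; rewrite !inE => /andP [/eqP Hba _] /andP [/eqP Hca _].
exists a, b, c; split => //; try by move=> H; subst.
rewrite -(setD1K Ha) Hbc'; apply/setP => z; rewrite !inE; bsolve.
Qed.

Lemma Pperm1 a b c : P a b c = P b c a.
Proof. by rewrite /P; congr (_ \in E); apply/setP => z; rewrite !inE; bsolve. Qed.
Lemma Pperm2 a b c : P a b c = P b a c.
Proof. by rewrite /P; congr (_ \in E); apply/setP => z; rewrite !inE; bsolve. Qed.

Definition N (v x : T) : {set T} :=
  [set z | (v != x) && (z != v) && (z != x) && ~~ P v x z].

Lemma clique_N v x : is_clique 3 E (N v x).
Proof.
apply/forallP => e; apply/implyP => /andP [HeN /eqP He].
have [a [b [c [Hab Hac Hbc Hee]]]] := card3 _ He.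
rewrite Hee in HeN *.
have Ha : a \in N v x by apply: (subsetP HeN); rewrite !inE eqxx.
have Hb : b \in N v x by apply: (subsetP HeN); rewrite !inE eqxx orbT.
have Hc : c \in N v x by apply: (subsetP HeN); rewrite !inE eqxx !orbT.
move: Ha Hb Hc; rewrite !inE => /andP [/andP [/andP [/eqP ? /eqP ?] /eqP ?] Pa]
  /andP [/andP [/andP [_ /eqP ?] /eqP ?] Pb] /andP [/andP [/andP [_ /eqP ?] /eqP ?] Pc].
by apply: (@keyA v x) => // H; subst.
Qed.

Lemma clique_ext (S : {set T}) u : is_clique 3 E S -> u \notin S ->
  (forall a b, a \in S -> b \in S -> a <> b -> P a b u) -> is_clique 3 E (u |: S).
Proof.
move=> HS HuS Hu; apply/forallP => e; apply/implyP => /andP [HeS /eqP He].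
have [a [b [c [Hab Hac Hbc Hee]]]] := card3 _ He.
have Ha : a \in u |: S by apply: (subsetP HeS); rewrite Hee !inE eqxx.
have Hb : b \in u |: S by apply: (subsetP HeS); rewrite Hee !inE eqxx orbT.
have Hc : c \in u |: S by apply: (subsetP HeS); rewrite Hee !inE eqxx !orbT.
move: Ha Hb Hc; rewrite !inE => /orP [/eqP Ha|Ha] /orP [/eqP Hb|Hb] /orP [/eqP Hc|Hc];
  subst; try congruence; rewrite -[_ \in E]/(P _ _ _).
- by rewrite -Pperm1 -Pperm1; apply: Hu.
- by rewrite -Pperm1 Pperm2; apply: Hu.
- by apply: Hu.
- apply: (implyP (forallP HS [set a; b; c])).
  rewrite He eqxx andbT; apply/subsetP => z; rewrite !inE.
  by move=> /orP [/orP [] | ] /eqP ->.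
Qed.

Lemma card_bigcup_le (I : finType) (A : {pred I}) (F : I -> {set T}) :
  #|\bigcup_(i in A) F i| <= \sum_(i in A) #|F i|.
Proof.
elim/big_rec2: _ => [|i X y _ HX]; first by rewrite cards0.
apply: leq_trans (leq_add (leqnn _) HX).
by rewrite cardsU leq_subr.
Qed.

Lemma greedy k : (forall v x, #|N v x| < k) -> expn k 3 <= #|T| ->
  forall j, j <= k -> exists S, is_clique 3 E S /\ #|S| = j.
Proof.
move=> Hk Hn; elim => [|j IH] Hj.
  exists set0; split; last by rewrite cards0.
  apply/forallP => e; rewrite subset0; apply/implyP => /andP [/eqP -> ].
  by rewrite cards0.
have [S [HS HSj]] := IH (ltnW Hj).
pose B := S :|: \bigcup_(a in S) \bigcup_(b in S) N a b.
have HB : #|B| < #|T|.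
  have h1 : #|B| <= #|S| + \sum_(a in S) \sum_(b in S) #|N a b|.
    rewrite cardsU; apply: leq_trans (leq_subr _ _) _.
    rewrite leq_add2l; apply: leq_trans (card_bigcup_le _ _ _) _.
    by apply: leq_sum => a _; apply: card_bigcup_le.
  have h2 : \sum_(a in S) \sum_(b in S) #|N a b| <= \sum_(a in S) \sum_(b in S) k.-1.
    apply: leq_sum => a _; apply: leq_sum => b _.
    by have := Hk a b; case: (k) => //.
  rewrite !sum_nat_const HSj in h2.
  rewrite HSj in h1.
  have h3 : j + j * (j * k.-1) < expn k 3.
    clear -Hj; case: k Hj => // k' Hj /=.
    rewrite !expnS expn0 muln1.
    have e1 : j * (j * k') <= k' * (k' * k') by rewrite leq_mul // leq_mul.
    nia.
  apply: (leq_ltn_trans h1); apply: leq_trans Hn; apply: leq_ltn_trans h3; by rewrite leq_add2l.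
have [u Hu] : exists u, u \notin B.
  apply/existsP; apply: contraLR HB => /existsPn Hall.
  rewrite -leqNgt; apply: subset_leq_card; apply/subsetP => z _.
  by move: (Hall z); rewrite negbK.
move: Hu; rewrite !inE negb_or => /andP [HuS HuN].
exists (u |: S); split; last by rewrite cardsU1 HuS HSj.
apply: clique_ext => // a b Ha Hb Hab.
have : u \notin N a b.
  apply: contra HuN => HuNab; apply/bigcupP; exists a => //.
  by apply/bigcupP; exists b.
rewrite !inE; move/eqP: Hab => -> /=.
have -> : (u != a) by apply: contraNneq HuS => ->.
have -> : (u != b) by apply: contraNneq HuS => ->.
by rewrite negbK.
Qed.

Theorem core k : expn k 3 <= #|T| -> exists S, homogeneous 3 E S /\ k <= #|S|.
Proof.
move=> Hn.
case: (boolP [exists v, exists x, k <= #|N v x|]).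
  move=> /existsP [v /existsP [x Hx]]; exists (N v x); split => //.
  by rewrite /homogeneous clique_N.
move=> /existsPn Hall.
have Hk : forall v x, #|N v x| < k.
  by move=> v x; move/existsPn: (Hall v) => /(_ x); rewrite -ltnNge.
have [S [HS HSk]] := greedy _ Hk Hn _ (leqnn k).
by exists S; rewrite /homogeneous HS HSk.
Qed.
End Core.

Lemma h_ge n k : expn k 3 <= n -> k <= n ->
  k <= h_rnQ 3 n [:: (4%nat, 0%nat); (4%nat, 2%nat)].
Proof.
move=> Hk Hkn; rewrite /h_rnQ; elim/big_ind: _ => //.
  by move=> x y Hx Hy; rewrite leq_min Hx Hy.
move=> E /andP [HE HQ].
have Hc : expn k 3 <= #|'I_n| by rewrite card_ord.
have [S [HS HSk]] := @core _ E HE HQ k Hc.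
apply: leq_trans HSk _; rewrite /hom_number.
exact: (@leq_bigmax_cond _ (fun S0 => homogeneous 3 E S0) (fun S0 => #|S0|) S HS).
Qed.

Lemma INR_expn m e : INR (expn m e) = (INR m ^ e)%R.
Proof.
elim: e => [|e IH]; first by rewrite expn0.
by rewrite expnS -multE mult_INR IH.
Qed.

Lemma kroot n : exists k, expn k 5 <= n < expn k.+1 5.
Proof.
elim: n => [|n [k /andP [H1 H2]]]; first by exists 0.
case: (ltnP n.+1 (expn k.+1 5)) => H.
  by exists k; rewrite H andbT; apply: leqW.
exists k.+1; have Hn : n.+1 = expn k.+1 5 by apply/eqP; rewrite eqn_leq H H2.
rewrite Hn leqnn /=; rewrite ltn_exp2r //.
Qed.

Theorem mainTheorem4 :
  exists c1 : R, (0 < c1)%R /\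
    forall n : nat, (5 < n)%nat ->
      (c1 * Rpower (INR n) (1 / 5) < INR (h_rnQ 3 n [:: (4%nat, 0%nat); (4%nat, 2%nat)]))%R.
Proof.
exists (1/2)%R; split; first lra.
move=> n Hn.
have [k /andP [H1 H2]] := kroot n.
have Hk1 : 0 < k.
  rewrite lt0n; apply/negP => /eqP Hk0; move: H2; rewrite Hk0. by move: Hn; case: n H1 => //.
have Hk3 : expn k 3 <= n by apply: leq_trans H1; rewrite leq_pexp2l.
have Hkn : k <= n by apply: leq_trans Hk3; rewrite -{1}(expn1 k) leq_pexp2l.
have Hh := h_ge _ _ Hk3 Hkn.
set h := h_rnQ _ _ _ in Hh *.
have HhR : (INR k <= INR h)%R by apply: le_INR; apply/leP.
have Hk1R : (1 <= INR k)%R by apply: (le_INR 1); apply/leP.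
have Hnpos : (0 < INR n)%R by apply: lt_0_INR; apply/ltP; apply: leq_trans Hn.
have Hlt : (INR n < INR k.+1 ^ 5)%R by rewrite -INR_expn; apply: lt_INR; apply/ltP.
have Hroot : Rpower (INR k.+1 ^ 5) (1 / 5) = INR k.+1.
  rewrite -(Rpower_pow 5); last by apply: lt_0_INR; apply/ltP.
  rewrite Rpower_mult.
  replace (INR 5 * (1 / 5))%R with 1%R by (simpl; field).
  by apply: Rpower_1; apply: lt_0_INR; apply/ltP.
have Hr : (Rpower (INR n) (1 / 5) < INR k.+1)%R.
  rewrite -Hroot; apply: Rlt_Rpower_l; first lra.
  by split.
rewrite S_INR in Hr.
lra.
Qed.
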